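(* Let $Y=W_1\times W_2$ with coordinates $(a,b,x,y)$, $T=ab$, and $$\Phi=\begin{pmatrix}1-T & a^4\\ -b^4 & 1+T+T^2+T^3\end{pmatrix},\qquad \varphi(a,b,x,y)=\Big(a,b,\Phi\tbinom{x}{y}\Big).$$ Then $\mu=\varphi\circ\mu_0$ is a real circle form on $Y$, and it is equivalent to the linear real circle form $\mu_0$.
   Context: For $k\ge1$, $W_k=\mathbb{C}^2$ is the $\mathbb{C}^*$-module with weights $(k,-k)$: $t\cdot(x,y)=(t^kx,t^{-k}y)$. Thus on $Y=W_1\times W_2$, $t\cdot(a,b,x,y)=(ta,t^{-1}b,t^2x,t^{-2}y)$. Let $\sigma(t)=\overline{t}^{-1}$ on $\mathbb{C}^*$. A real circle form on $Y$ is an antiholomorphic involution $\mu$ of $Y$ with $\mu(t\cdot p)=\sigma(t)\cdot\mu(p)$ for all $t\in\mathbb{C}^*$, $p\in Y$; two such forms $\mu_1,\mu_2$ are equivalent if $\mu_2=\psi\circ\mu_1\circ\psi^{-1}$ for some regular $\mathbb{C}^*$-equivariant automorphism $\psi$ of $Y$. Here $\mu_0(a,b,x,y)=(\overline{b},\overline{a},\overline{y},\overline{x})$. *)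

(* Defs.v *)
From HB Require Import structures.
From mathcomp Require Import all_boot all_order all_algebra.
Set Implicit Arguments. Unset Strict Implicit. Unset Printing Implicit Defensive.
Import Order.TTheory GRing.Theory Num.Theory.
Local Open Scope ring_scope.

Section Defs.
Variable C : numClosedFieldType.

(* Points of Y = W_1 x W_2 = C^4, coordinates (a,b,x,y). *)
Definition Y := (C * C * C * C)%type.

Inductive poly4 : Type :=
| Xa | Xb | Xx | Xy
| Cst of C
| Add of poly4 & poly4
| Mul of poly4 & poly4.

Fixpoint peval (P : poly4) (p : Y) : C :=
  let '(a, b, x, y) := p in
  match P with
  | Xa => a | Xb => b | Xx => x | Xy => y
  | Cst c => c
  | Add P1 P2 => peval P1 p + peval P2 p
  | Mul P1 P2 => peval P1 p * peval P2 p
  end.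

Definition regular (f : Y -> Y) : Prop :=
  exists P1 P2 P3 P4 : poly4,
    forall p, f p = (peval P1 p, peval P2 p, peval P3 p, peval P4 p).

Definition antiregular (f : Y -> Y) : Prop :=
  exists P1 P2 P3 P4 : poly4,
    forall p, f p = ((peval P1 p)^*, (peval P2 p)^*, (peval P3 p)^*, (peval P4 p)^*).

Definition act (t : C) (p : Y) : Y :=
  let '(a, b, x, y) := p in (t * a, t^-1 * b, t ^+ 2 * x, t ^- 2 * y).

Definition sigma (t : C) : C := (t^*)^-1.

Definition real_circle_form (mu : Y -> Y) : Prop :=
  [/\ antiregular mu,
      (forall p, mu (mu p) = p) &
      (forall t p, t != 0 -> mu (act t p) = act (sigma t) (mu p))].

Definition equiv_auto (psi psi_inv : Y -> Y) : Prop :=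
  [/\ regular psi, regular psi_inv,
      cancel psi psi_inv, cancel psi_inv psi &
      (forall t p, t != 0 -> psi (act t p) = act t (psi p))].

Definition equivalent_forms (mu1 mu2 : Y -> Y) : Prop :=
  exists psi psi_inv, equiv_auto psi psi_inv /\
    forall p, mu2 p = psi (mu1 (psi_inv p)).

Definition mu0 (p : Y) : Y :=
  let '(a, b, x, y) := p in (b^*, a^*, y^*, x^*).

Definition phi (p : Y) : Y :=
  let '(a, b, x, y) := p in
  let T := a * b in
  (a, b, (1 - T) * x + a ^+ 4 * y, - (b ^+ 4) * x + (1 + T + T ^+ 2 + T ^+ 3) * y).

Definition mu (p : Y) : Y := phi (mu0 p).

End Defs.

(* Main.v *)
Require Import Defs.
From HB Require Import structures.
From mathcomp Require Import all_boot all_order all_algebra.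
From mathcomp Require Import ring.
Import Order.TTheory GRing.Theory Num.Theory.
Local Open Scope ring_scope.

Arguments Xa {C}. Arguments Xb {C}. Arguments Xx {C}. Arguments Xy {C}.
Arguments Cst {C}. Arguments Add {C}. Arguments Mul {C}.
Section Aux.
Variable C : numClosedFieldType.

Definition Tp : poly4 C := Mul Xa Xb.
Definition A4 : poly4 C := Mul (Mul Xa Xa) (Mul Xa Xa).
Definition B4 : poly4 C := Mul (Mul Xb Xb) (Mul Xb Xb).
Definition g_p : poly4 C := Cst ((1 + 'i) / 4).
Definition k_p : poly4 C := Add (Cst 1) (Add (Mul (Cst ((1 + 'i) / 2)) Tp)
  (Mul (Cst ((1 + 'i) / 4)) (Add (Mul Tp Tp) (Mul Tp (Mul Tp Tp))))).
Definition f_p : poly4 C := Add (Mul (Cst ((1 - 'i) / 4)) (Mul Tp Tp))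
  (Mul (Add (Cst 1) (Mul (Cst (-1)) Tp)) (Add (Cst 1) (Mul (Cst ((1 - 'i) / 2)) Tp))).
Definition h_p : poly4 C := Add (Cst ((-3 - 'i) / 4)) (Mul (Cst ((-1 + 'i) / 4)) Tp).

Definition psiP3 := Add (Mul f_p Xx) (Mul (Mul A4 g_p) Xy).
Definition psiP4 := Add (Mul (Mul B4 h_p) Xx) (Mul k_p Xy).
Definition psiiP3 := Add (Mul k_p Xx) (Mul (Cst (-1)) (Mul (Mul A4 g_p) Xy)).
Definition psiiP4 := Add (Mul (Cst (-1)) (Mul (Mul B4 h_p) Xx)) (Mul f_p Xy).

Definition psi (p : Y C) : Y C := (peval Xa p, peval Xb p, peval psiP3 p, peval psiP4 p).
Definition psii (p : Y C) : Y C := (peval Xa p, peval Xb p, peval psiiP3 p, peval psiiP4 p).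

Definition muP3 : poly4 C :=
  Add (Mul (Add (Cst 1) (Mul (Cst (-1)) (Mul Xb Xa))) Xy) (Mul B4 Xx).
Definition muP4 : poly4 C :=
  Add (Mul (Cst (-1)) (Mul A4 Xy))
      (Mul (Add (Cst 1) (Add (Mul Xb Xa) (Add (Mul (Mul Xb Xa) (Mul Xb Xa))
            (Mul (Mul Xb Xa) (Mul (Mul Xb Xa) (Mul Xb Xa)))))) Xx).

Lemma n2 : (2 : C) != 0. Proof. by rewrite pnatr_eq0. Qed.
Lemma n4 : (4 : C) != 0. Proof. by rewrite pnatr_eq0. Qed.

End Aux.

Section CL.
Variable C : numClosedFieldType.
Lemma cD (x y : C) : (x + y)^* = x^* + y^*. Proof. exact: rmorphD. Qed.
Lemma cB (x y : C) : (x - y)^* = x^* - y^*. Proof. exact: rmorphB. Qed.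
Lemma cN (x : C) : (- x)^* = - x^*. Proof. exact: rmorphN. Qed.
Lemma cM (x y : C) : (x * y)^* = x^* * y^*. Proof. exact: rmorphM. Qed.
Lemma cX (x : C) n : (x ^+ n)^* = x^* ^+ n. Proof. exact: rmorphXn. Qed.
Lemma cV (x : C) : (x^-1)^* = (x^*)^-1. Proof. exact: fmorphV. Qed.
Lemma c1 : (1 : C)^* = 1. Proof. exact: rmorph1. Qed.
Lemma cn n : (n%:R : C)^* = n%:R. Proof. exact: rmorph_nat. Qed.
End CL.
Ltac pushc := rewrite ?(cD, cB, cN, cM, cX, cV, c1, cn, conjCK, conjCi).

Theorem proposition6p1 (C : numClosedFieldType) :
  real_circle_form (@mu C) /\ equivalent_forms (@mu0 C) (@mu C).
Proof.
have hi : ('i : C) ^+ 2 = -1 := sqrCi C.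
have h2 := n2 C. have h4 := n4 C.
split.
  split.
  - exists Xb, Xa, (muP3 C), (muP4 C) => [[[[a b] x] y]].
    rewrite /mu /mu0 /phi /=; pushc; congr (_, _, _, _); ring.
  - move=> [[[a b] x] y]; rewrite /mu /mu0 /phi /=; pushc.
    congr (_, _, _, _); ring.
  - move=> t [[[a b] x] y] t0; rewrite /mu /mu0 /phi /act /sigma /=; pushc.
    have t0' : t^* != 0 by rewrite conjC_eq0.
    by congr (_, _, _, _); field; exact: t0'.
rewrite /equivalent_forms; exists (psi C); exists (psii C); split.
  split.
  - by exists Xa, Xb, (psiP3 C), (psiP4 C).
  - by exists Xa, Xb, (psiiP3 C), (psiiP4 C).
  - move=> [[[a b] x] y]; rewrite /psi /psii /=.
    by congr (_, _, _, _); field: hi.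
  - move=> [[[a b] x] y]; rewrite /psi /psii /=.
    by congr (_, _, _, _); field: hi.
  - move=> t [[[a b] x] y] t0; rewrite /psi /act /=.
    by congr (_, _, _, _); field: hi.
move=> [[[a b] x] y]; rewrite /mu /mu0 /phi /psi /psii /=; pushc.
by congr (_, _, _, _); field: hi.
Qed.
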